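(* Let $H$ be a homogeneous relation on a finite set $V$. If $H$ fulfills A2 or A3, then $\mathcal F_H$ is a weakly partitive family. If $H$ fulfills A1, then $\mathcal F_H$ is a partitive family.
   Context: $V$ is a finite set. A reflectless triple is a triple $(x,y,z)\in V^3$ with $x\neq y$ and $x\neq z$, written $(x|yz)$. A homogeneous relation $H$ on $V$ is a set of reflectless triples (we write $H(s|xy)$ when $(s|xy)\in H$, and $H(s|xy)$ is considered false when $(s|xy)$ is not reflectless) such that for every $s\in V$ the binary relation $H_s=\{(x,y): H(s|xy)\}$ is an equivalence relation on $V\setminus\{s\}$. For $X\subseteq V$ and $s\notin X$, $s$ distinguishes $X$ if there are $x,y\in X$ with not $H(s|xy)$. A homogeneous set is a nonempty $M\subseteq V$ such that no element of $V\setminus M$ distinguishes $M$; $\mathcal F_H$ denotes the family of homogeneous sets. Axioms (required for all elements for which every triple appearing is reflectless): A1: $H(x|yz)\wedge H(y|xz)\Rightarrow H(z|xy)$. A2: $H(x|st)\wedge H(y|st)\wedge H(t|xy)\Rightarrow H(s|xy)$. A3: $H(x|st)\wedge H(y|st)\wedge H(t|sx)\wedge H(t|sy)\Rightarrow H(s|xy)$. Two sets $A,B$ overlap if $A\cap B$, $A\setminus B$, $B\setminus A$ are all nonempty. A family $\mathcal F\subseteq\mathcal P(V)$ is weakly partitive if it contains $V$ and every singleton $\{v\}$, $v\in V$, and for all overlapping $A,B\in\mathcal F$ the sets $A\cap B$, $A\cup B$, $A\setminus B$ belong to $\mathcal F$. It is partitive if moreover for all overlapping $A,B\in\mathcal F$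 the symmetric difference $A\Delta B=(A\setminus B)\cup(B\setminus A)$ belongs to $\mathcal F$. *)

(* Defs.v *)
From mathcomp Require Import all_boot.
Set Implicit Arguments. Unset Strict Implicit. Unset Printing Implicit Defensive.

Section Defs.
Variable V : finType.

(* A ternary relation on V: [H s x y] stands for H(s|xy). *)
Definition trel := V -> V -> V -> bool.

Definition reflectless (s x y : V) : bool := (s != x) && (s != y).

Definition homogeneous_relation (H : trel) : Prop :=
  (forall s x y, H s x y -> reflectless s x y) /\
  (forall s x, x != s -> H s x x) /\
  (forall s x y, H s x y -> H s y x) /\
  (forall s x y z, H s x y -> H s y z -> H s x z).

Definition axiomA1 (H : trel) : Prop :=
  forall x y z,
    reflectless x y z -> reflectless y x z -> reflectless z x y ->
    H x y z -> H y x z -> H z x y.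

Definition axiomA2 (H : trel) : Prop :=
  forall x y s t,
    reflectless x s t -> reflectless y s t -> reflectless t x y ->
    reflectless s x y ->
    H x s t -> H y s t -> H t x y -> H s x y.

Definition axiomA3 (H : trel) : Prop :=
  forall x y s t,
    reflectless x s t -> reflectless y s t -> reflectless t s x ->
    reflectless t s y -> reflectless s x y ->
    H x s t -> H y s t -> H t s x -> H t s y -> H s x y.

Definition distinguishes (H : trel) (s : V) (X : {set V}) : bool :=
  [exists x in X, exists y in X, ~~ H s x y].

Definition homogeneous_set (H : trel) (M : {set V}) : bool :=
  (M != set0) && [forall s in ~: M, ~~ distinguishes H s M].

Definition overlap (A B : {set V}) : bool :=
  [&& A :&: B != set0, A :\: B != set0 & B :\: A != set0].

Definition weakly_partitive (F : {set V} -> bool) : Prop :=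
  F [set: V] /\ (forall v, F [set v]) /\
  (forall A B, F A -> F B -> overlap A B ->
     [/\ F (A :&: B), F (A :|: B) & F (A :\: B)]).

Definition partitive (F : {set V} -> bool) : Prop :=
  weakly_partitive F /\
  (forall A B, F A -> F B -> overlap A B -> F ((A :\: B) :|: (B :\: A))).

End Defs.

(* Main.v *)
Require Import Defs.
From mathcomp Require Import all_boot.
Set Implicit Arguments. Unset Strict Implicit.

Section Aux.
Variable V : finType.
Variable H : V -> V -> V -> bool.
Hypothesis Href : forall s x y, H s x y -> reflectless s x y.
Hypothesis Hrefl : forall s x, x != s -> H s x x.
Hypothesis Hsym : forall s x y, H s x y -> H s y x.
Hypothesis Htr : forall s x y z, H s x y -> H s y z -> H s x z.

Lemma hsP M : reflect (M != set0 /\ forall s x y, s \notin M -> x \in M -> y \in M -> H s x y)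
  (homogeneous_set H M).
Proof.
rewrite /homogeneous_set /distinguishes; apply: (iffP andP) => [[nM /forallP h]|[nM h]]; split=>//.
- move=> s x y sM xM yM. have := h s; rewrite in_setC sM /= => /existsPn /(_ x).
  rewrite negb_and xM /= => /existsPn /(_ y); rewrite negb_and yM /= negbK; done.
- apply/forallP=> s; apply/implyP; rewrite in_setC => sM; apply/existsPn => x.
  case: (boolP (x \in M)) => xM //=; apply/existsPn=> y.
  case: (boolP (y \in M)) => yM //=; rewrite negbK; exact: h.
Qed.

Lemma neqm (A : {set V}) a b : a \in A -> b \notin A -> a != b.
Proof. by move=> aA bA; apply/eqP=> e; move: bA; rewrite -e aA. Qed.

Lemma inter_hs A B : homogeneous_set H A -> homogeneous_set H B -> overlap A B ->
  homogeneous_set H (A :&: B).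
Proof.
move=> /hsP[_ hA] /hsP[_ hB] /and3P[nI _ _]; apply/hsP; split=> // s x y.
rewrite !inE negb_and => /orP[] sn /andP[xA xB] /andP[yA yB]; auto.
Qed.

Lemma union_hs A B : homogeneous_set H A -> homogeneous_set H B -> overlap A B ->
  homogeneous_set H (A :|: B).
Proof.
move=> /hsP[_ hA] /hsP[_ hB] /and3P[nI _ _]; apply/hsP; split.
  apply: contraNneq nI => e; apply/eqP/setP => z; rewrite !inE.
  by apply/negP => /andP[zA _]; have := in_set0 z; rewrite -e inE zA.
move=> s x y; rewrite !inE negb_or => /andP[sA sB].
case/set0Pn: nI => z; rewrite inE => /andP[zA zB].
have hz : forall w, (w \in A) || (w \in B) -> H s w z.
  by move=> w /orP[] wi; auto.
move=> xi yi; apply: (Htr (hz x xi)); apply: Hsym; exact: hz.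
Qed.

Lemma diff_gen A B : homogeneous_set H A -> homogeneous_set H B -> overlap A B ->
  (forall s x y t, s \in A -> s \in B -> x \in A -> x \notin B -> y \in A -> y \notin B ->
     t \in B -> t \notin A -> H s x y) ->
  homogeneous_set H (A :\: B).
Proof.
move=> /hsP[_ hA] /hsP[_ hB] /and3P[_ nD nD'] key; apply/hsP; split=> // s x y.
rewrite !inE negb_and negbK => /orP[sB|sA] /andP[xB xA] /andP[yB yA]; last by auto.
case/set0Pn: nD' => t; rewrite inE => /andP[tA tB].
case sA: (s \in A); last by apply: hA; rewrite ?sA.
exact: (key s x y t).
Qed.

End Aux.

Theorem mainTheorem8 (V : finType) (H : V -> V -> V -> bool) :
  0 < #|V| ->
  homogeneous_relation H ->
  ((axiomA2 H \/ axiomA3 H) -> weakly_partitive (homogeneous_set H)) /\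
  (axiomA1 H -> partitive (homogeneous_set H)).
Proof.
move=> V0 [Href [Hrefl [Hsym Htr]]].
have hT : homogeneous_set H [set: V].
  apply/hsP; split; last by move=> s x y; rewrite inE.
  by case/card_gt0P: V0 => v _; apply/set0Pn; exists v; rewrite inE.
have h1 : forall v, homogeneous_set H [set v].
  move=> v; apply/hsP; split; first by apply/set0Pn; exists v; rewrite inE.
  by move=> s x y; rewrite !inE => sv /eqP -> /eqP ->; apply: Hrefl; rewrite eq_sym.
have wp : (forall A B, homogeneous_set H A -> homogeneous_set H B -> overlap A B ->
  (forall s x y t, s \in A -> s \in B -> x \in A -> x \notin B -> y \in A -> y \notin B ->
     t \in B -> t \notin A -> H s x y)) -> weakly_partitive (homogeneous_set H).
  move=> K; split=> //; split=> // A B hA hB ov; split.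
  - exact: inter_hs.
  - exact: union_hs.
  - by apply: diff_gen => //; apply: K.
have key1 : axiomA1 H -> forall A B, homogeneous_set H A -> homogeneous_set H B ->
    forall s x t, s \in A -> s \in B -> x \in A -> x \notin B -> t \in B -> t \notin A -> H s x t.
  move=> A1 A B /hsP[_ hA] /hsP[_ hB] s x t sA sB xA xB tB tA.
  have Hx : H x t s by apply: hB.
  have Ht : H t x s by apply: hA.
  have := A1 x t s (Href _ _ _ Hx) (Href _ _ _ Ht); apply => //.
  by rewrite /reflectless (neqm sB xB) (neqm sA tA).
split.
  case=> Ax; apply: wp => A B hA hB ov s x y t sA sB xA xB yA yB tB tA.
  - apply: (Ax x y s t).
    + by rewrite /reflectless (neqm xA tA) eq_sym (neqm sB xB).
    + by rewrite /reflectless (neqm yA tA) eq_sym (neqm sB yB).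
    + by rewrite /reflectless eq_sym (neqm xA tA) eq_sym (neqm yA tA).
    + by rewrite /reflectless (neqm sB xB) (neqm sB yB).
    + by apply: (proj2 (elimT (hsP H B) hB)).
    + by apply: (proj2 (elimT (hsP H B) hB)).
    + by apply: (proj2 (elimT (hsP H A) hA)).
  - apply: (Ax x y s t).
    + by rewrite /reflectless (neqm xA tA) eq_sym (neqm sB xB).
    + by rewrite /reflectless (neqm yA tA) eq_sym (neqm sB yB).
    + by rewrite /reflectless eq_sym (neqm sA tA) eq_sym (neqm xA tA).
    + by rewrite /reflectless eq_sym (neqm sA tA) eq_sym (neqm yA tA).
    + by rewrite /reflectless (neqm sB xB) (neqm sB yB).
    + by apply: (proj2 (elimT (hsP H B) hB)).
    + by apply: (proj2 (elimT (hsP H B) hB)).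
    + by apply: (proj2 (elimT (hsP H A) hA)).
    + by apply: (proj2 (elimT (hsP H A) hA)).
move=> A1; split.
  apply: wp => A B hA hB ov s x y t sA sB xA xB yA yB tB tA.
  apply: (Htr _ _ t _ (key1 A1 A B hA hB s x t sA sB xA xB tB tA)).
  by apply: Hsym; apply: (key1 A1 A B hA hB s y t).
move=> A B hA hB ov.
have [_ hsA] := elimT (hsP H A) hA.
have [_ hsB] := elimT (hsP H B) hB.
case/and3P: (ov) => _ nD nD'.
case/set0Pn: nD' => t; rewrite inE => /andP[tA tB].
apply/(hsP H); split.
  by apply/set0Pn; exists t; rewrite !inE tA tB.
move=> s x y; rewrite !inE.
case sA: (s \in A); case sB: (s \in B) => //= _.
-
  have hz : forall w, ((w \notin B) && (w \in A)) || ((w \notin A) && (w \in B)) -> H s w t.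
    move=> w /orP[/andP[wB wA]|/andP[wA wB]].
    + exact: (key1 A1 A B hA hB).
    + case/set0Pn: nD => u; rewrite inE => /andP[uB uA].
      apply: (Htr _ _ u _); first by apply: Hsym; apply: (key1 A1 A B hA hB).
      exact: (key1 A1 A B hA hB).
  move=> xi yi; apply: (Htr _ _ t _ (hz x xi)); apply: Hsym; exact: hz.
-
  have hu := union_hs Hsym Htr hA hB ov.
  have [_ hU] := elimT (hsP H _) hu.
  move=> /orP[]/andP[_ xi] /orP[]/andP[_ yi]; apply: hU; rewrite ?inE ?sA ?sB ?xi ?yi ?orbT //.
Qed.
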